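(* For the binary tree-shifts $X_{10}=(B,D)$ and $X_{12}=(B,F)$, the limit $h_{PS}$ exists and $$h_{PS}(X_{10})=h_{PS}(X_{12})=\frac12\sum_{n=2}^\infty\frac{\log n}{2^n}.$$
   Context: Binary tree-shifts: $k=2$, directions $a_1,a_2$, alphabet $\{0,1\}$; $(P,Q)$ is the set of trees $t:\{a_1,a_2\}^*\to\{0,1\}$ with $P_{t_x,t_{xa_1}}=1$, $Q_{t_x,t_{xa_2}}=1$ for all nodes $x$. Matrices: $B=\begin{pmatrix}1&0\\0&1\end{pmatrix}$, $D=\begin{pmatrix}1&1\\1&0\end{pmatrix}$, $F=\begin{pmatrix}0&1\\1&1\end{pmatrix}$. $p(n)$ is the number of allowed blocks of length $n$ (labellings $t|_{\Delta_n}$, $\Delta_n$ the words of length $\le n$), and $h_{PS}=\lim_{n\to\infty}\frac{\log p(n)}{1+2+\cdots+2^n}$. *)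

(* Defs.v *)
From HB Require Import structures.
From mathcomp Require Import all_boot all_order all_algebra.
From mathcomp Require Import all_classical all_reals all_analysis.
Set Implicit Arguments. Unset Strict Implicit. Unset Printing Implicit Defensive.
Import Order.TTheory GRing.Theory Num.Theory.

(* Directions: a1 = false, a2 = true.
   Nodes are words over {a1,a2}: seq bool; the child x a_i is rcons x a_i. *)

Definition node := seq bool.

Definition in_shift (P Q : 'M[nat]_2) (t : node -> 'I_2) : Prop :=
  forall x : node, P (t x) (t (rcons x false)) = 1%N /\ Q (t x) (t (rcons x true)) = 1%N.

Fixpoint words_len (k : nat) : seq node :=
  if k is k'.+1 then
    [seq rcons w b | w <- words_len k', b <- [:: false; true]]
  else [:: [::]].

Definition words_upto (n : nat) : seq node :=
  flatten [seq words_len k | k <- iota 0 n.+1].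

(* the block t|_{Delta_n}, listed along the (duplicate-free) enumeration words_upto n *)
Definition block (t : node -> 'I_2) (n : nat) : seq 'I_2 := map t (words_upto n).

Definition allowed_blocks (P Q : 'M[nat]_2) (n : nat) :
  {set (size (words_upto n)).-tuple 'I_2} :=
  [set s | `[< exists t, in_shift P Q t /\ block t n = tval s >]].

Definition p_count (P Q : 'M[nat]_2) (n : nat) : nat := #|allowed_blocks P Q n|.

Definition matB : 'M[nat]_2 := \matrix_(i < 2, j < 2) nat_of_bool (i == j).
Definition matD : 'M[nat]_2 :=
  \matrix_(i < 2, j < 2) (if (i == 1 :> nat) && (j == 1 :> nat) then 0 else 1)%N.
Definition matF : 'M[nat]_2 :=
  \matrix_(i < 2, j < 2) (if (i == 0 :> nat) && (j == 0 :> nat) then 0 else 1)%N.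

Local Open Scope ring_scope.

Definition hPS_seq (R : realType) (P Q : 'M[nat]_2) (n : nat) : R :=
  ln ((p_count P Q n)%:R) / (\sum_(i < n.+1) 2 ^ i)%N%:R.

Definition log_series_partial (R : realType) (N : nat) : R :=
  \sum_(2 <= n < N) ln (n%:R : R) / 2 ^+ n.

(* Main.v *)
Require Import Defs.
From HB Require Import structures.
From mathcomp Require Import all_boot all_order all_algebra.
From mathcomp Require Import all_classical all_reals all_analysis.
From mathcomp Require Import ring lra zify.
From Stdlib Require List.
Import Order.TTheory GRing.Theory Num.Theory.
Import numFieldNormedType.Exports.
Set Implicit Arguments. Unset Strict Implicit. Unset Printing Implicit Defensive.

Definition o0 : 'I_2 := @Ordinal 2 0 isT.
Definition o1 : 'I_2 := @Ordinal 2 1 isT.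
Lemma I2_cases (c : 'I_2) : c = o0 \/ c = o1.
Proof. case: c => [[|[|m]]] Hc; [left|right|by []]; exact: val_inj. Qed.

Definition tree := node -> 'I_2.
Definition agree n (t t' : tree) := forall w : node, (size w <= n)%N -> t w = t' w.

Lemma mem_words_len k w : (w \in words_len k) = (size w == k).
Proof.
elim: k w => [|k IH] w /=.
  by case: w.
apply/flatten_mapP/idP => [[w' Hw']|].
  by rewrite !inE => /orP [] /eqP ->; rewrite size_rcons eqSS -IH.
case/lastP: w => [//|w' b]; rewrite size_rcons eqSS -IH => Hw'.
exists w' => //; by case: b; rewrite !inE eqxx ?orbT.
Qed.

Lemma mem_words_upto n w : (w \in words_upto n) = (size w <= n)%N.
Proof.
apply/flatten_mapP/idP => [[k] | H].
  by rewrite mem_iota add0n ltnS => Hk; rewrite mem_words_len => /eqP ->.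
exists (size w); first by rewrite mem_iota add0n ltnS.
by rewrite mem_words_len.
Qed.

Lemma block_eq t t' n : block t n = block t' n <-> agree n t t'.
Proof.
rewrite /block; split.
  move/eq_in_map => H w Hw. apply: H. by rewrite mem_words_upto.
move=> H; apply/eq_in_map => w; rewrite mem_words_upto; exact: H.
Qed.

Definition join (c : 'I_2) (t1 t2 : tree) : tree :=
  fun w => match w with [::] => c | b :: w' => if b then t2 w' else t1 w' end.

Lemma join_shift P Q c t1 t2 : in_shift P Q t1 -> in_shift P Q t2 ->
  P c (t1 [::]) = 1%N -> Q c (t2 [::]) = 1%N -> in_shift P Q (join c t1 t2).
Proof.
move=> H1 H2 HP HQ [|b x] /=; first by [].
by case: b; [exact: H2 | exact: H1].
Qed.

Definition sub (b : bool) (t : tree) : tree := fun w => t (b :: w).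
Lemma sub_shift P Q b t : in_shift P Q t -> in_shift P Q (sub b t).
Proof. move=> H x; exact: (H (b :: x)). Qed.

Lemma In_cat T (x : T) s1 s2 : List.In x (s1 ++ s2) <-> List.In x s1 \/ List.In x s2.
Proof. elim: s1 => [|y s1 IH] /=; [tauto| have := IH; tauto]. Qed.

Lemma In_map T U (f : T -> U) s y : List.In y (map f s) <-> exists x, List.In x s /\ y = f x.
Proof.
elim: s y => [|x0 s IH] y /=; first by split => // [[x []]].
split.
  case => [<-|/IH [x [Hx ->]]]; [exists x0; by split; [left|] | exists x; split; [by right|by []]].
case=> x [[<-|Hx] ->]; [by left | right; apply/IH; by exists x].
Qed.

Lemma In_flatten T (x : T) ss : List.In x (flatten ss) <-> exists s, List.In s ss /\ List.In x s.
Proof.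
elim: ss x => [|s0 ss IH] x /=; first by split => // [[s []]].
rewrite In_cat; split.
  case => [H|/IH [s [Hs Hx]]]; [exists s0; by split; [left|] | exists s; split; [by right|by []]].
case=> s [[<-|Hs] Hx]; [by left | right; apply/IH; by exists s].
Qed.

Lemma In_mem (T : eqType) (x : T) s : List.In x s <-> x \in s.
Proof.
elim: s => [|y s IH] //=; rewrite in_cons; split.
  by case=> [->|/IH ->]; rewrite ?eqxx ?orbT.
by case/orP => [/eqP ->|/IH]; [left|right].
Qed.

Lemma mem_map_In T (K : eqType) (k : T -> K) s z :
  z \in map k s <-> exists x, List.In x s /\ z = k x.
Proof.
elim: s z => [|y s IH] z /=; first by split => // [[x []]].
rewrite in_cons; split.
  case/orP => [/eqP ->|/IH [x [Hx ->]]]; [exists y; by split; [left|] | exists x; split; [by right|by []]].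
case=> x [[<-|Hx] ->]; first by rewrite eqxx.
by apply/orP; right; apply/IH; exists x.
Qed.

Definition pairs T (f : T -> T -> T) (A B : seq T) : seq T :=
  flatten [seq [seq f x y | y <- B] | x <- A].

Lemma In_pairs T (f : T -> T -> T) A B z :
  List.In z (pairs f A B) <-> exists x y, List.In x A /\ List.In y B /\ z = f x y.
Proof.
rewrite /pairs In_flatten; split.
  case=> s [/In_map [x [Hx ->]] /In_map [y [Hy ->]]]; by exists x, y.
case=> x [y [Hx [Hy ->]]]; exists [seq f x y | y <- B]; split; apply/In_map.
  by exists x.
by exists y.
Qed.

Lemma size_pairs T (f : T -> T -> T) A B : size (pairs f A B) = (size A * size B)%N.
Proof. elim: A => [|x A IH] //=; by rewrite size_cat size_map IH mulSn. Qed.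

Definition Rs (L : 'I_2 -> seq tree) (s : seq 'I_2) := flatten [seq L d | d <- s].

Lemma In_Rs L s t : List.In t (Rs L s) <-> exists d, d \in s /\ List.In t (L d).
Proof.
rewrite /Rs In_flatten; split.
  by case=> s0 [/In_map [d [Hd ->]] Ht]; exists d; rewrite -In_mem.
by case=> d [Hd Ht]; exists (L d); split=> //; apply/In_map; exists d; rewrite In_mem.
Qed.

Lemma size_Rs L s : size (Rs L s) = sumn [seq size (L d) | d <- s].
Proof. elim: s => [|d s IH] //=; by rewrite size_cat -IH. Qed.

Lemma uniq_map_weak T (K1 K2 : eqType) (h : T -> K1) (k : T -> K2) s :
  uniq (map h s) -> (forall y y', k y = k y' -> h y = h y') -> uniq (map k s).
Proof.
move=> U Hk; elim: s U => [|y s IH] //= /andP [Hy U]; rewrite IH // andbT.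
apply/negP => /mem_map_In [y' [Hy' E]]; move/negP: Hy; apply.
rewrite (Hk _ _ E); apply/mem_map_In; by exists y'.
Qed.

Lemma uniq_pairs T (K1 K2 K : eqType) (f : T -> T -> T) (kA : T -> K1) (kB : T -> K2) (k : T -> K) A B :
  uniq (map kA A) -> uniq (map kB B) ->
  (forall x x' y y', k (f x y) = k (f x' y') -> kA x = kA x' /\ kB y = kB y') ->
  uniq (map k (pairs f A B)).
Proof.
move=> UA UB Hf; elim: A UA => [|x A IH] //= /andP [Hx UA].
rewrite map_cat cat_uniq IH // andbT; apply/andP; split.
  rewrite -map_comp; apply: (uniq_map_weak UB) => y y' /= E.
  by case: (Hf _ _ _ _ E).
apply/hasP => [[z /mem_map_In [u [Hu ->]]]].
move/In_pairs: Hu => [x' [y' [Hx' [Hy' ->]]]].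
move/mem_map_In => [v [/In_map [y [_ ->]] E]].
case: (Hf _ _ _ _ E) => E1 _; move/negP: Hx; apply.
by rewrite -E1; apply/mem_map_In; exists x'.
Qed.

Lemma uniq_Rs (K : eqType) (k : tree -> K) L s : uniq s ->
  (forall d, uniq (map k (L d))) ->
  (forall d d' x y, List.In x (L d) -> List.In y (L d') -> k x = k y -> d = d') ->
  uniq (map k (Rs L s)).
Proof.
move=> Us UL HL; elim: s Us => [|d s IH] //= /andP [Hd Us].
rewrite map_cat cat_uniq UL IH // andbT /=.
apply/hasP => [[z /mem_map_In [u [/In_Rs [d' [Hd' Hu]] ->]]]].
move/mem_map_In => [v [Hv E]].
have Edd := HL _ _ _ _ Hv Hu (esym E); move/negP: Hd; apply; by rewrite Edd.
Qed.

Definition succ (P : 'M[nat]_2) (c : 'I_2) : seq 'I_2 := [seq d <- [:: o0; o1] | P c d == 1%N].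

Section Enum.
Variables (P Q : 'M[nat]_2) (base : 'I_2 -> tree).
Hypothesis base_shift : forall c, in_shift P Q (base c).
Hypothesis base_root : forall c, base c [::] = c.

Fixpoint Lt n c : seq tree := if n is n'.+1 then
  pairs (join c) (Rs (Lt n') (succ P c)) (Rs (Lt n') (succ Q c)) else [:: base c].

Lemma Lt_prop n c t : List.In t (Lt n c) -> in_shift P Q t /\ t [::] = c.
Proof.
elim: n c t => [|n IH] c t /=.
  by case=> // <-.
move/In_pairs => [x [y [/In_Rs [d1 [H1 Hx]] [/In_Rs [d2 [H2 Hy]] ->]]]].
have [Sx Rx] := IH _ _ Hx; have [Sy Ry] := IH _ _ Hy.
split=> //; apply: join_shift => //.
  by move: H1; rewrite mem_filter Rx => /andP [/eqP].
by move: H2; rewrite mem_filter Ry => /andP [/eqP].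
Qed.

Lemma mem_I2 (d : 'I_2) : d \in [:: o0; o1].
Proof. by case: (I2_cases d) => ->. Qed.

Lemma Lt_complete n c t : in_shift P Q t -> t [::] = c ->
  exists t', List.In t' (Lt n c) /\ agree n t t'.
Proof.
elim: n c t => [|n IH] c t Ht Hc.
  exists (base c); split; first by left.
  by case=> [|? ?] // _; rewrite base_root.
have [x [Hx Ax]] := IH _ (sub false t) (sub_shift false Ht) erefl.
have [y [Hy Ay]] := IH _ (sub true t) (sub_shift true Ht) erefl.
exists (join c x y); split.
  apply/In_pairs; exists x, y; split; last split => //.
    apply/In_Rs; exists (sub false t [::]); split=> //.
    rewrite mem_filter mem_I2 andbT /sub -Hc; case: (Ht [::]) => /= -> _ //.
  apply/In_Rs; exists (sub true t [::]); split=> //.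
  rewrite mem_filter mem_I2 andbT /sub -Hc; case: (Ht [::]) => /= _ -> //.
case=> [|b w] //= Hw; case: b; [exact: Ay | exact: Ax].
Qed.

Lemma join_inj n c x x' y y' :
  block (join c x y) n.+1 = block (join c x' y') n.+1 ->
  block x n = block x' n /\ block y n = block y' n.
Proof.
move/block_eq => H; split; apply/block_eq => w Hw.
  exact: (H (false :: w)).
exact: (H (true :: w)).
Qed.

Lemma block_root n t t' : block t n = block t' n -> t [::] = t' [::].
Proof. by move/block_eq => H; apply: H. Qed.

Lemma Lt_uniq n c : uniq (map (block^~ n) (Lt n c)).
Proof.
elim: n c => [|n IH] c //=.
have UR : forall Z, uniq (map (block^~ n) (Rs (Lt n) (succ Z c))).
  move=> Z; apply: uniq_Rs => //.
    by apply: filter_uniq.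
  move=> d d' x y Hx Hy /block_root.
  by rewrite (Lt_prop Hx).2 (Lt_prop Hy).2.
apply: (uniq_pairs (UR P) (UR Q)) => x x' y y'; exact: join_inj.
Qed.

Lemma card_tuples (T : finType) k (l : seq (seq T)) : uniq l ->
  all (fun x => size x == k) l ->
  #|[set s : k.-tuple T | tval s \in l]| = size l.
Proof.
move=> Ul Al; rewrite cardE -(size_map val).
apply/perm_size/uniq_perm.
- by rewrite (map_inj_uniq val_inj) enum_uniq.
- exact: Ul.
move=> x; apply/mapP/idP => [[s] | Hx].
  by rewrite mem_enum inE => Hs ->.
have Hs : size x == k by move/allP: Al; apply.
by exists (Tuple Hs); rewrite // mem_enum inE.
Qed.

Lemma p_count_eq n : p_count P Q n = (size (Lt n o0) + size (Lt n o1))%N.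
Proof.
have -> : (size (Lt n o0) + size (Lt n o1))%N = size (map (block^~ n) (Rs (Lt n) [:: o0; o1])).
  by rewrite size_map size_Rs /= addn0.
rewrite /p_count -(@card_tuples _ (size (words_upto n)) (map (block^~ n) (Rs (Lt n) [:: o0; o1]))).
- congr (#|pred_of_set _|); apply/setP => s; rewrite !inE; apply/asboolP/idP.
    case=> t [Ht Hb]; have [t' [Ht' A]] := Lt_complete n Ht erefl.
    apply/mem_map_In; exists t'; split.
      apply/In_Rs; exists (t [::]); split=> //; exact: mem_I2.
    by rewrite -Hb; apply/block_eq => w Hw; rewrite A.
  move/mem_map_In => [t [/In_Rs [d [_ Ht]] E]]; exists t; split=> //.
  exact: (Lt_prop Ht).1.
- apply: uniq_Rs => //; first exact: Lt_uniq.
  move=> d d' x y Hx Hy /block_root.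
  by rewrite (Lt_prop Hx).2 (Lt_prop Hy).2.
apply/allP => z /mem_map_In [t [_ ->]]; by rewrite size_map.
Qed.

End Enum.

Definition allf (w : node) : bool := all (fun b => ~~ b) w.

Definition baseD (c : 'I_2) : tree :=
  if c == o0 then (fun _ => o0) else (fun w => if allf w then o1 else o0).
Definition baseF (c : 'I_2) : tree :=
  if c == o1 then (fun _ => o1) else (fun w => if allf w then o0 else o1).

Lemma baseD_shift c : in_shift matB matD (baseD c).
Proof.
case: (I2_cases c) => -> x; rewrite /baseD /= !mxE /allf ?all_rcons /= ?andbF;
  first [by split; rewrite ?eqxx | by case: (all _ x); split; rewrite ?eqxx].
Qed.
Lemma baseF_shift c : in_shift matB matF (baseF c).
Proof.
case: (I2_cases c) => -> x; rewrite /baseF /= !mxE /allf ?all_rcons /= ?andbF;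
  first [by split; rewrite ?eqxx | by case: (all _ x); split; rewrite ?eqxx].
Qed.
Lemma baseD_root c : baseD c [::] = c.
Proof. by case: (I2_cases c) => ->. Qed.
Lemma baseF_root c : baseF c [::] = c.
Proof. by case: (I2_cases c) => ->. Qed.

Lemma succB0 : succ matB o0 = [:: o0]. Proof. by rewrite /succ /= !mxE. Qed.
Lemma succB1 : succ matB o1 = [:: o1]. Proof. by rewrite /succ /= !mxE. Qed.
Lemma succD0 : succ matD o0 = [:: o0; o1]. Proof. by rewrite /succ /= !mxE. Qed.
Lemma succD1 : succ matD o1 = [:: o0]. Proof. by rewrite /succ /= !mxE. Qed.
Lemma succF0 : succ matF o0 = [:: o1]. Proof. by rewrite /succ /= !mxE. Qed.
Lemma succF1 : succ matF o1 = [:: o0; o1]. Proof. by rewrite /succ /= !mxE. Qed.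

Fixpoint Yseq (n : nat) : nat := if n is n'.+1 then (n * (Yseq n') ^ 2)%N else 1%N.

Lemma rec_sol (X Y : nat -> nat) : X 0 = 1%N -> Y 0 = 1%N ->
  (forall n, X n.+1 = X n * (X n + Y n))%N -> (forall n, Y n.+1 = Y n * X n)%N ->
  forall n, (X n = n.+1 * Y n)%N /\ Y n = Yseq n.
Proof.
move=> X0 Y0 HX HY; elim=> [|n [IHx IHy]]; first by rewrite X0 Y0.
rewrite HX HY IHx /= -IHy; split; nia.
Qed.

Lemma pD n : p_count matB matD n = ((n.+2) * Yseq n)%N.
Proof.
rewrite (p_count_eq baseD_shift baseD_root).
set X := fun n => size (Lt matB matD baseD n o0).
set Y := fun n => size (Lt matB matD baseD n o1).
have HX : forall m, (X m.+1 = X m * (X m + Y m))%N.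
  move=> m; rewrite /X /Y /= size_pairs !size_Rs succB0 succD0 /=; nia.
have HY : forall m, (Y m.+1 = Y m * X m)%N.
  move=> m; rewrite /Y /X /= size_pairs !size_Rs succB1 succD1 /=; nia.
have [EX EY] := rec_sol (X:=X) (Y:=Y) erefl erefl HX HY n.
rewrite -/(X n) -/(Y n) EX -EY; nia.
Qed.

Lemma pF n : p_count matB matF n = ((n.+2) * Yseq n)%N.
Proof.
rewrite (p_count_eq baseF_shift baseF_root).
set X := fun n => size (Lt matB matF baseF n o1).
set Y := fun n => size (Lt matB matF baseF n o0).
have HX : forall m, (X m.+1 = X m * (X m + Y m))%N.
  move=> m; rewrite /X /Y /= size_pairs !size_Rs succB1 succF1 /=; nia.
have HY : forall m, (Y m.+1 = Y m * X m)%N.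
  move=> m; rewrite /Y /X /= size_pairs !size_Rs succB0 succF0 /=; nia.
have [EX EY] := rec_sol (X:=X) (Y:=Y) erefl erefl HX HY n.
rewrite -/(X n) -/(Y n) EX -EY; nia.
Qed.

Local Open Scope classical_set_scope.
Local Open Scope ring_scope.

Section Ana.
Variable R : realType.
Notation part := (log_series_partial R).

Lemma Yseq_gt0 n : (0 < Yseq n)%N.
Proof. elim: n => [|n IH] //=; rewrite muln_gt0 expn_gt0 IH; lia. Qed.

Lemma part_small N : (N <= 2)%N -> part N = 0.
Proof. by move=> H; rewrite /log_series_partial big_geq. Qed.

Lemma partS n : part n.+2 = part n.+1 + ln (n.+1%:R : R) / 2 ^+ n.+1.
Proof.
case: n => [|n].
  by rewrite !part_small // ln1 mul0r addr0.
by rewrite /log_series_partial big_nat_recr.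
Qed.

Lemma lnY n : ln ((Yseq n)%:R : R) = 2 ^+ n * part n.+1.
Proof.
elim: n => [|n IH].
  by rewrite /= ln1 part_small // mulr0.
have Yp : (0 : R) < (Yseq n)%:R by rewrite ltr0n Yseq_gt0.
rewrite /= natrM natrX lnM; last 2 first.
- by rewrite posrE ltr0n.
- by rewrite posrE exprn_gt0.
rewrite lnXn // IH partS.
set q : R := 2 ^+ n; rewrite exprS -/q.
have q0 : q != 0 by rewrite expf_neq0.
rewrite mulr2n; field; by rewrite q0 /=.
Qed.

Lemma ln_le_nat k : (0 < k)%N -> ln (k%:R : R) <= k%:R.
Proof.
move=> k0; have k1 : (1 : R) <= k%:R by rewrite ler1n.
have H1 : -1 < (k%:R : R) - 1 by lra.
have := le_ln1Dx H1; rewrite [1 + _]addrC subrK; lra.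
Qed.

Lemma sum_k2k N : \sum_(0 <= k < N) (k%:R : R) / 2 ^+ k = 2 - 2 * N.+1%:R / 2 ^+ N.
Proof.
elim: N => [|N IH].
  rewrite big_geq // expr0; lra.
rewrite big_nat_recr // IH /=.
set q : R := 2 ^+ N; rewrite exprS -/q.
have q0 : q != 0 by rewrite expf_neq0.
rewrite -!natr1 -?addn1 ?natrD; field; by rewrite q0.
Qed.

Lemma part_le2 N : part N <= 2.
Proof.
case: (leqP N 2) => HN; first by rewrite part_small.
apply: (@le_trans _ _ (\sum_(2 <= k < N) (k%:R : R) / 2 ^+ k)).
  apply: ler_sum_nat => i /andP [Hi _].
  apply: ler_wpM2r; first by rewrite invr_ge0 exprn_ge0.
  apply: ln_le_nat; by apply: leq_trans Hi.
apply: (@le_trans _ _ (\sum_(0 <= k < N) (k%:R : R) / 2 ^+ k)).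
  rewrite [X in _ <= X](@big_cat_nat _ _ _ 2 0 N) //=; last exact: ltnW.
  rewrite lerDr; apply: sumr_ge0 => i _; by rewrite divr_ge0 ?exprn_ge0.
rewrite sum_k2k lerBlDr lerDl; by rewrite divr_ge0 ?exprn_ge0 ?mulr_ge0.
Qed.

Lemma part_incr : {homo part : n m / (n <= m)%N >-> n <= m}.
Proof.
apply/nondecreasing_seqP => n.
case: n => [|n]; first by rewrite !part_small.
rewrite partS lerDl divr_ge0 ?exprn_ge0 // ln_ge0 // ler1n //.
Qed.

Lemma part_cvg : part @ \oo --> sup (range part).
Proof.
apply: nondecreasing_cvgn; first exact: part_incr.
by exists 2 => _ [n _ <-]; exact: part_le2.
Qed.


Definition Dn (n : nat) : nat := (\sum_(i < n.+1) 2 ^ i)%N.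

Lemma Dn_eq n : (Dn n).+1 = (2 ^ n.+1)%N.
Proof.
elim: n => [|n IH]; first by rewrite /Dn big_ord1.
rewrite /Dn big_ord_recr /= -/(Dn n) expnS -addSn IH expnS !expnS; lia.
Qed.

Lemma DnR n : ((Dn n)%:R : R) = 2 * 2 ^+ n - 1.
Proof.
have := congr1 (fun m => (m%:R : R)) (Dn_eq n).
rewrite /= -natr1 natrX => E; rewrite -exprS; lra.
Qed.

Lemma Dn_ge n : (n.+1 <= Dn n)%N.
Proof. have := Dn_eq n; have := @ltn_expl 2 n.+1 isT; lia. Qed.

Lemma Dn_ge2 n : (n.+1 * n.+1 <= 2 * Dn n)%N.
Proof.
elim: n => [|n IH]; first by rewrite /Dn big_ord1.
have E := Dn_eq n.+1; have E' := Dn_eq n; have := @ltn_expl 2 n.+2 isT.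
rewrite expnS in E; nia.
Qed.

Lemma squeeze0 (g : nat -> R) c : (forall n, 0 <= g n <= c * (n.+1%:R)^-1) ->
  g @ \oo --> 0.
Proof.
move=> H.
apply: (@squeeze_cvgr _ _ _ _ (fun=> 0) (fun n => c * harmonic n)).
- by apply: nearW => n; exact: H.
- exact: cvg_cst.
have -> : 0 = c * 0 :> R by rewrite mulr0.
apply: cvgM; [exact: cvg_cst | exact: cvg_harmonic].
Qed.


Lemma ratio_cvg : (fun n => 2 ^+ n / ((Dn n)%:R : R)) @ \oo --> (2^-1 : R).
Proof.
have E : forall n, 2 ^+ n / ((Dn n)%:R : R) = 2^-1 + 2^-1 / (Dn n)%:R.
  move=> n; have D0 : ((Dn n)%:R : R) != 0 by rewrite pnatr_eq0 -lt0n; apply: leq_trans (Dn_ge n).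
  move: D0; rewrite DnR => D0; field; by rewrite D0.
have -> : (fun n => 2 ^+ n / ((Dn n)%:R : R)) = (fun n => 2^-1 + 2^-1 / (Dn n)%:R).
  by apply/funext => n; rewrite E.
rewrite -[X in _ --> X]addr0; apply: cvgD; first exact: cvg_cst.
apply: (@squeeze0 _ 1) => n.
have Dp : (0 : R) < (Dn n)%:R by rewrite ltr0n; apply: leq_trans (Dn_ge n).
have Dg : (n.+1%:R : R) <= (Dn n)%:R by rewrite ler_nat Dn_ge.
have np : (0 : R) < n.+1%:R by rewrite ltr0n.
apply/andP; split; first by rewrite divr_ge0 // invr_ge0.
rewrite mul1r ler_pdivrMr // mulrC ler_pdivlMr //; lra.
Qed.

Lemma hlim : (fun n => ln (((n.+2) * Yseq n)%N%:R : R) / (Dn n)%:R) @ \oo --> 2^-1 * sup (range part).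
Proof.
have E : forall n, ln (((n.+2) * Yseq n)%N%:R : R) / (Dn n)%:R =
   ln (n.+2%:R) / (Dn n)%:R + 2 ^+ n / (Dn n)%:R * part n.+1.
  move=> n; rewrite natrM lnM; last 2 first.
  - by rewrite posrE ltr0n.
  - by rewrite posrE ltr0n Yseq_gt0.
  by rewrite lnY mulrDl mulrAC.
have -> : (fun n => ln (((n.+2) * Yseq n)%N%:R : R) / (Dn n)%:R) =
   (fun n => ln (n.+2%:R) / (Dn n)%:R + 2 ^+ n / (Dn n)%:R * part n.+1).
  by apply/funext => n; rewrite E.
rewrite -[X in _ --> X]add0r; apply: cvgD.
  apply: (@squeeze0 _ 2) => n.
  have Dp : (0 : R) < (Dn n)%:R by rewrite ltr0n; apply: leq_trans (Dn_ge n).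
  have np : (0 : R) < n.+1%:R by rewrite ltr0n.
  have l0 : (0 : R) <= ln (n.+2%:R) by rewrite ln_ge0 // ler1n.
  have l1 : ln (n.+2%:R : R) <= n.+1%:R.
    have H1 : -1 < (n.+1%:R : R) by apply: lt_trans np; lra.
    by have := le_ln1Dx H1; rewrite [1 + _]addrC natr1.
  have D2 : (n.+1%:R * n.+1%:R : R) <= 2 * (Dn n)%:R.
    by rewrite -natrM -(natrM _ 2) ler_nat Dn_ge2.
  apply/andP; split; first by rewrite divr_ge0 // ltW.
  rewrite ler_pdivrMr // mulrAC ler_pdivlMr //; nra.
have Hp : (fun n => part n.+1) @ \oo --> sup (range part).
  by have := part_cvg; rewrite -cvg_shiftS.
exact: (cvgM ratio_cvg Hp).
Qed.

End Ana.

Theorem mainTheorem16 (R : realType) :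
  exists S : R,
    log_series_partial R @ \oo --> S /\
    hPS_seq R matB matD @ \oo --> 2^-1 * S /\
    hPS_seq R matB matF @ \oo --> 2^-1 * S.
Proof.
exists (sup (range (log_series_partial R))); split; first exact: part_cvg.
have H : forall P Q, (forall n, p_count P Q n = (n.+2 * Yseq n)%N) ->
    hPS_seq R P Q @ \oo --> 2^-1 * sup (range (log_series_partial R)).
  move=> P Q Hp.
  have -> : hPS_seq R P Q = (fun n => ln ((n.+2 * Yseq n)%N%:R : R) / (Dn n)%:R).
    by apply/funext => n; rewrite /hPS_seq Hp.
  exact: hlim.
by split; apply: H; [exact: pD | exact: pF].
Qed.
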